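(* Let $\mathcal{X}$ be a finite alphabet and $\mathcal{W}=\{W_x\}_{x\in\mathcal{X}}$ a classical-quantum channel. Let $n,M$ be integers and $r\in(C_0(\mathcal{W}),C(\mathcal{W}))$. Let $\mathcal{T}_n(\mathcal{X})$ be the set of types of alphabet $\mathcal{X}$ and length $n$, and $\gamma_n=\frac12(n+1)^{-|\mathcal{X}|}$. Then \[ \varepsilon^{\rm NS}\big(M,\mathcal{W}^{\otimes n}\otimes\mathcal{I}_2\big)\ge\inf_{T\in\mathcal{T}_n(\mathcal{X})}\sup_{\sigma\in\mathcal{S}(\mathcal{H}),\,s\ge0}\Big\{\gamma_n\,\mathrm{Tr}\big[W_T^{\otimes n}\wedge Ms\,\sigma^{\otimes n}\big]-s\Big\}, \] where $W_T^{\otimes n}=\bigotimes_{x\in\mathcal{X}}W_x^{\otimes nT_x}$.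
   Context: $\mathcal{H}$ finite-dimensional Hilbert space, $\mathcal{S}(\mathcal{H})$ its density operators. A classical-quantum channel is $\mathcal{W}=\{W_x\}_{x\in\mathcal{X}}\subset\mathcal{S}(\mathcal{H})$. A type of length $n$ on $\mathcal{X}$ is a distribution $T=(T_x)_{x\in\mathcal{X}}$ with $nT_x\in\mathbb{N}$ for all $x$. For Hermitian $X=\sum_i\lambda_i\Pi_i$: $|X|=\sum_i|\lambda_i|\Pi_i$, and $A\wedge B=\frac12(A+B-|A-B|)$. For $M>0$: $1-\varepsilon^{\rm NS}(M,\mathcal{W})=\sup\{\frac1M\sum_x\mathrm{Tr}[\Lambda_xW_x]:\sum_x\Lambda_x=\mathbb{I},\ 0\preccurlyeq\Lambda_x\preccurlyeq p(x)\mathbb{I},\ p(x)\ge0,\ \sum_xp(x)=M\}$. $\mathcal{W}^{\otimes n}$ has alphabet $\mathcal{X}^n$ and outputs $W_{x_1}\otimes\cdots\otimes W_{x_n}$; $\mathcal{I}_2$ is the cq channel on $\{1,2\}$ with outputs $|i\rangle\langle i|$; $\mathcal{W}\otimes\mathcal{I}_2$ has alphabet $\mathcal{X}\times\{1,2\}$ and outputs $W_x\otimes|i\rangle\langle i|$. With the Petz Rényi divergence $D_\alpha(\rho\|\sigma)=\frac1{\alpha-1}\log\mathrm{Tr}[\rho^\alpha\sigma^{1-\alpha}]$ ($\alpha\in(0,1)$), $D_1$ the Umegaki relative entropy and $D_0(\rho\|\sigma)=-\log\mathrm{Tr}[\rho^0\sigma]$ ($\rho^0$ the support projection), $C_\alpha(\mathcal{W})=\sup_{p\in\mathcal{P}(\mathcal{X})}\inf_{\sigma}\sum_xp(x)D_\alpha(W_x\|\sigma)$,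 $C(\mathcal{W})=C_1(\mathcal{W})$. *)

(* Defs.v *)
From HB Require Import structures.
From mathcomp Require Import all_boot all_order all_algebra.
From mathcomp Require Import sesquilinear spectral.
From mathcomp Require Import complex mxtens.
From mathcomp Require Import classical_sets boolp reals constructive_ereal ereal.
From mathcomp Require Import exp.

Set Implicit Arguments.
Unset Strict Implicit.
Unset Printing Implicit Defensive.

Import Order.TTheory GRing.Theory Num.Theory.
Local Open Scope ring_scope.
Local Open Scope classical_set_scope.

Section QDefs.
Variable R : realType.
Local Notation C := R[i].

Definition cR (x : R) : C := Complex x 0.

Definition retr m (A : 'M[C]_m) : R := complex.Re (\tr A).

Definition psdmx m (A : 'M[C]_m) : Prop :=
  A \is hermsymmx /\
  forall v : 'rV[C]_m, 0 <= (v *m A *m (map_mx Num.conj v)^T) 0 0.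
Definition lemx m (A B : 'M[C]_m) : Prop := psdmx (B - A).

Definition density m (A : 'M[C]_m) : Prop := psdmx A /\ \tr A = 1.

Definition cqchannel (X : finType) m (W : X -> 'M[C]_m) : Prop :=
  forall x, density (W x).

(* functional calculus for Hermitian matrices via the spectral decomposition
   A = P^-1 diag(lambda) P of the library (eigenvalues are real for
   Hermitian A): f(A) = P^-1 diag(f(lambda)) P. *)
Definition mxfun (f : R -> R) m (A : 'M[C]_m) : 'M[C]_m :=
  invmx (spectralmx A) *m
  diag_mx (map_mx (fun z : C => cR (f (complex.Re z))) (spectral_diag A)) *m
  spectralmx A.

Definition absmx m (A : 'M[C]_m) : 'M[C]_m := mxfun Num.norm A.
Definition meetmx m (A B : 'M[C]_m) : 'M[C]_m :=
  (2%:R)^-1 *: (A + B - absmx (A - B)).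
Definition suppmx m (A : 'M[C]_m) : 'M[C]_m :=
  mxfun (fun l => (l != 0)%:R) A.

Definition NS_success (X : finType) m (M : R) (W : X -> 'M[C]_m) : set R :=
  [set y : R | exists (Lam : X -> 'M[C]_m) (p : X -> R),
      [/\ \sum_x Lam x = 1%:M,
          forall x, lemx 0 (Lam x) /\ lemx (Lam x) (cR (p x))%:M,
          forall x, 0 <= p x,
          \sum_x p x = M &
          y = M^-1 * \sum_x retr (Lam x *m W x)]].
Definition eps_NS (X : finType) m (M : R) (W : X -> 'M[C]_m) : \bar R :=
  (1 - ereal_sup (EFin @` NS_success M W))%E.

(* D_0(rho||sigma) = - log Tr[rho^0 sigma]  (= +oo when the trace is 0) *)
Definition D0 m (rho sigma : 'M[C]_m) : \bar R :=
  let Q := retr (suppmx rho *m sigma) in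
  if Q == 0 then +oo%E else (- @ln R Q)%:E.

(* Umegaki relative entropy D(rho||sigma) = Tr[rho (log rho - log sigma)]
   if supp rho <= supp sigma, +oo otherwise (log taken on the supports) *)
Definition D1 m (rho sigma : 'M[C]_m) : \bar R :=
  if suppmx rho *m suppmx sigma == suppmx rho
  then (retr (rho *m (mxfun (@ln R) rho - mxfun (@ln R) sigma)))%:E
  else +oo%E.

Definition prob_dist (X : finType) (p : X -> R) : Prop :=
  (forall x, 0 <= p x) /\ \sum_x p x = 1.

Definition capacity (X : finType) m
    (D : 'M[C]_m -> 'M[C]_m -> \bar R) (W : X -> 'M[C]_m) : \bar R :=
  ereal_sup [set c : \bar R | exists p : X -> R, prob_dist p /\
    c = ereal_inf [set v : \bar R | exists sigma : 'M[C]_m, density sigma /\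
          v = (\sum_x ((p x)%:E * D (W x) sigma))%E]].

Definition C0cap (X : finType) m (W : X -> 'M[C]_m) := capacity (@D0 m) W.
Definition Ccap (X : finType) m (W : X -> 'M[C]_m) := capacity (@D1 m) W.

Fixpoint tens_rec m k : ('I_k.+1 -> 'M[C]_m) -> 'M[C]_(m ^ k.+1) :=
  if k is k'.+1 return ('I_k.+1 -> 'M[C]_m) -> 'M[C]_(m ^ k.+1)
  then fun f => f ord0 *t tens_rec (fun i : 'I_k'.+1 => f (lift ord0 i))
  else fun f => f ord0.
Definition tens_pow m n : ('I_n -> 'M[C]_m) -> 'M[C]_(m ^ n) :=
  if n is k.+1 return ('I_n -> 'M[C]_m) -> 'M[C]_(m ^ n)
  then fun f => tens_rec f else fun _ => 1.

Definition cq_pow (X : finType) m (W : X -> 'M[C]_m) n (w : n.-tuple X)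
  : 'M[C]_(m ^ n) := tens_pow (fun i => W (tnth w i)).

(* W^{(x)n} (x) I_2 : alphabet X^n * {1,2}, outputs W_{x^n} (x) |i><i| *)
Definition chan_pow_I2 (X : finType) m (W : X -> 'M[C]_m) n
  (xi : n.-tuple X * 'I_2) : 'M[C]_(m ^ n * 2) :=
  cq_pow W xi.1 *t delta_mx xi.2 xi.2.

(* types of length n on X, represented by their counts k_x = n T_x *)
Definition types (X : finType) n : set {ffun X -> nat} :=
  [set k | (\sum_x k x)%N = n].

Definition type_word (X : finType) (k : {ffun X -> nat}) : seq X :=
  flatten [seq nseq (k x) x | x <- enum X].

Definition WT (X : finType) m (W : X -> 'M[C]_m) n (k : {ffun X -> nat})
  : 'M[C]_(m ^ n) :=
  if (insub (type_word k) : option (n.-tuple X)) is Some w then cq_pow W w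
  else 0.

Definition gamma_n (X : finType) n : R := (2%:R)^-1 * (n.+1%:R ^- #|X|).

End QDefs.

(* Main.v *)
Require Import Defs.
From HB Require Import structures.
From mathcomp Require Import all_boot all_order all_algebra.
From mathcomp Require Import sesquilinear spectral complex mxtens.
From mathcomp Require Import classical_sets boolp reals constructive_ereal ereal exp.
From mathcomp Require Import ring lra.
From mathcomp Require Import fingroup perm.

Import Order.TTheory GRing.Theory Num.Theory.
Local Open Scope ring_scope.
Local Open Scope classical_set_scope.

Set Implicit Arguments. Unset Strict Implicit. Unset Printing Implicit Defensive.
Section Basics.
Variable R : realType.
Local Notation C := R[i].
Local Open Scope sesquilinear_scope.

Lemma ReD (x y : C) : complex.Re (x + y) = complex.Re x + complex.Re y.
Proof. by case: x; case: y. Qed.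
Lemma ReN (x : C) : complex.Re (- x) = - complex.Re x.
Proof. by case: x. Qed.
Lemma ReB (x y : C) : complex.Re (x - y) = complex.Re x - complex.Re y.
Proof. by rewrite ReD ReN. Qed.
Lemma Re0 : complex.Re (0 : C) = 0. Proof. by []. Qed.
Lemma Re1 : complex.Re (1 : C) = 1. Proof. by []. Qed.
Lemma Re_sum (I : Type) (r : seq I) (P : pred I) (F : I -> C) :
  complex.Re (\sum_(i <- r | P i) F i) = \sum_(i <- r | P i) complex.Re (F i).
Proof. exact: (big_morph _ ReD Re0). Qed.
Lemma ReMR (z : C) (x : R) : complex.Re (z * cR x) = complex.Re z * x.
Proof. by case: z => a b /=; rewrite mulr0 subr0. Qed.
Lemma ReRM (z : C) (x : R) : complex.Re (cR x * z) = x * complex.Re z.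
Proof. by case: z => a b /=; rewrite mul0r subr0. Qed.
Lemma cRM (x y : R) : cR (x * y) = cR x * cR y.
Proof. by apply/eqP; rewrite eq_complex /= !mulr0 mul0r subr0 addr0 !eqxx. Qed.
Lemma cRD (x y : R) : cR (x + y) = cR x + cR y.
Proof. by apply/eqP; rewrite eq_complex /= addr0 !eqxx. Qed.
Lemma cRB (x y : R) : cR (x - y) = cR x - cR y.
Proof. by apply/eqP; rewrite eq_complex /= subr0 !eqxx. Qed.
Lemma cR1 : cR 1 = 1 :> R[i]. Proof. by apply/eqP; rewrite eq_complex /= !eqxx. Qed.
Lemma cR0 : cR 0 = 0 :> R[i]. Proof. by apply/eqP; rewrite eq_complex /= !eqxx. Qed.
Lemma Re_cR (x : R) : complex.Re (cR x) = x. Proof. by []. Qed.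
Lemma conj_cR (x : R) : (cR x)^* = cR x.
Proof. by apply/eqP; rewrite eq_complex /= oppr0 !eqxx. Qed.
Lemma ge0_Re (z : C) : 0 <= z -> 0 <= complex.Re z.
Proof. by rewrite lecE => /andP[]. Qed.
Lemma ge0_real (z : C) : 0 <= z -> z = cR (complex.Re z).
Proof. by case: z => a b; rewrite lecE /= => /andP[/eqP -> _]. Qed.
Lemma cR_ge0 (x : R) : (0 <= cR x) = (0 <= x).
Proof. by rewrite lecE /= eqxx. Qed.
Lemma mul_conj_ge0 (z : C) : 0 <= z * z^*.
Proof. exact: mul_conjC_ge0. Qed.
End Basics.
Section Psd.
Variable R : realType.
Local Notation C := R[i].
Local Open Scope sesquilinear_scope.

Lemma adjE m n (A : 'M[C]_(m, n)) i j : (A^t*) i j = (A j i)^*.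
Proof. by rewrite !mxE. Qed.
Lemma adjM m n p (A : 'M[C]_(m, n)) (B : 'M[C]_(n, p)) :
  (A *m B)^t* = B^t* *m A^t*.
Proof. by rewrite trmx_mul map_mxM. Qed.
Lemma adjD m n (A B : 'M[C]_(m, n)) : (A + B)^t* = A^t* + B^t*.
Proof. by apply/matrixP=> i j; rewrite !mxE rmorphD. Qed.
Lemma adjB m n (A B : 'M[C]_(m, n)) : (A - B)^t* = A^t* - B^t*.
Proof. by apply/matrixP=> i j; rewrite !mxE rmorphB. Qed.
Lemma adjZR m n (x : R) (A : 'M[C]_(m, n)) : (cR x *: A)^t* = cR x *: A^t*.
Proof. by apply/matrixP=> i j; rewrite !mxE rmorphM /= conj_cR; reflexivity. Qed.
Lemma adj_scalarR m (x : R) : ((cR x)%:M : 'M[C]_m)^t* = (cR x)%:M.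
Proof.
apply/matrixP=> i j; rewrite !mxE eq_sym.
by case: (i == j); rewrite ?mulr1n ?mulr0n ?conj_cR ?rmorph0.
Qed.
Lemma adj1 m : (1%:M : 'M[C]_m)^t* = 1%:M.
Proof. by rewrite -cR1 adj_scalarR. Qed.
Lemma adj_diagR m (f : 'I_m -> R) :
  (diag_mx (\row_i cR (f i)))^t* = diag_mx (\row_i cR (f i)).
Proof.
apply/matrixP=> i j; rewrite !mxE eq_sym.
case: eqP => [->|_]; last by rewrite !mulr0n rmorph0.
by rewrite !mulr1n conj_cR.
Qed.

Definition qf m (v : 'rV[C]_m) (A : 'M[C]_m) : C := (v *m A *m v^t*) 0 0.

Lemma qfD m (v : 'rV[C]_m) (A B : 'M[C]_m) : qf v (A + B) = qf v A + qf v B.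
Proof. by rewrite /qf mulmxDr mulmxDl mxE. Qed.
Lemma qfB m (v : 'rV[C]_m) (A B : 'M[C]_m) : qf v (A - B) = qf v A - qf v B.
Proof. by rewrite /qf mulmxBr mulmxBl mxE [in X in _ + X = _]mxE. Qed.
Lemma qfZ m (v : 'rV[C]_m) c (A : 'M[C]_m) : qf v (c *: A) = c * qf v A.
Proof. by rewrite /qf -scalemxAr -scalemxAl mxE. Qed.
Lemma qf_scalar m (v : 'rV[C]_m) c : qf v (c%:M : 'M[C]_m) = c * qf v 1%:M.
Proof. by rewrite -[c%:M]scalemx1 qfZ. Qed.
Lemma qf_conj m n (E : 'M[C]_(m, n)) (v : 'rV[C]_m) (A : 'M[C]_n) :
  qf v (E *m A *m E^t*) = qf (v *m E) A.
Proof. by rewrite /qf adjM !mulmxA. Qed.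
Lemma gram_ge0 m (w : 'rV[C]_m) : 0 <= (w *m w^t*) 0 0.
Proof.
rewrite mxE; apply: sumr_ge0 => k _; rewrite !mxE; exact: mul_conj_ge0.
Qed.
Lemma qf1_ge0 m (w : 'rV[C]_m) : 0 <= qf w 1%:M.
Proof. by rewrite /qf mulmx1 gram_ge0. Qed.

Lemma hermP m (A : 'M[C]_m) : reflect (A = A^t*) (A \is hermsymmx).
Proof.
rewrite qualifE expr0 scale1r; exact: eqP.
Qed.

Lemma psdE m (A : 'M[C]_m) :
  psdmx A <-> (A = A^t* /\ forall v, 0 <= qf v A).
Proof.
rewrite /psdmx /qf; split=> [[/hermP h1 h2]|[h1 h2]]; split.
- by [].
- by move=> v; have := h2 v; rewrite map_trmx.
- exact/hermP.
- by move=> v; rewrite map_trmx.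
Qed.

Lemma psd_gram p m (B : 'M[C]_(p, m)) : psdmx (B^t* *m B).
Proof.
apply/psdE; split; first by rewrite adjM trmxCK.
move=> v; have -> : B^t* *m B = B^t* *m 1%:M *m (B^t*)^t*.
  by rewrite mulmx1 trmxCK.
by rewrite qf_conj qf1_ge0.
Qed.

Lemma psd_conj m n (E : 'M[C]_(m, n)) (A : 'M[C]_n) : psdmx A -> psdmx (E *m A *m E^t*).
Proof.
move=> /psdE[h1 h2]; apply/psdE; split; last by move=> v; rewrite qf_conj.
by rewrite !adjM trmxCK -h1 mulmxA.
Qed.

Lemma psd_herm m (A : 'M[C]_m) : psdmx A -> A = A^t*.
Proof. by case/psdE. Qed.
Lemma psd_qf m (A : 'M[C]_m) (v : 'rV[C]_m) : psdmx A -> 0 <= qf v A.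
Proof. by case/psdE=> _ ->. Qed.
End Psd.
Section Spec.
Variable R : realType.
Local Notation C := R[i].
Local Open Scope sesquilinear_scope.

Lemma real_cR (z : C) : z^* = z -> z = cR (complex.Re z).
Proof.
case: z => a b /= /eqP; rewrite eq_complex /= => /andP[_ /eqP hb].
have -> : b = 0 by lra.
by [].
Qed.

Definition lam m (H : 'M[C]_m) i : R := complex.Re (spectral_diag H 0 i).
Definition pos (x : R) : R := (x + `|x|) / 2.
Definition Pos m (H : 'M[C]_m) : R := \sum_i pos (lam H i).

Lemma pos_ge0 x : 0 <= pos x.
Proof.
rewrite /pos; have [h|h] := lerP 0 x.
  by rewrite ger0_norm //; lra.
by rewrite ltr0_norm //; lra.
Qed.
Lemma Pos_ge0 m (H : 'M[C]_m) : 0 <= Pos H.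
Proof. by apply: sumr_ge0 => i _; exact: pos_ge0. Qed.

Lemma UUt m (H : 'M[C]_m) : spectralmx H *m (spectralmx H)^t* = 1%:M.
Proof. exact/unitarymxP/spectral_unitarymx. Qed.
Lemma UtU m (H : 'M[C]_m) : (spectralmx H)^t* *m spectralmx H = 1%:M.
Proof.
by rewrite -invmx_unitary ?spectral_unitarymx // mulVmx // spectral_unit.
Qed.

Lemma diag_real m (H : 'M[C]_m) : H \is hermsymmx ->
  spectral_diag H = \row_i cR (lam H i).
Proof.
move=> hH; have /mxOverP hr := hermitian_spectral_diag_real hH.
apply/rowP => i; rewrite mxE /lam; apply: real_cR.
by apply/CrealP; exact: hr.
Qed.

Lemma spec_decomp m (H : 'M[C]_m) : H \is hermsymmx ->
  H = (spectralmx H)^t* *m diag_mx (\row_i cR (lam H i)) *m spectralmx H.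
Proof.
move=> hH; have /orthomx_spectralP e := hermitian_normalmx hH.
by rewrite -diag_real // -invmx_unitary ?spectral_unitarymx //.
Qed.

Lemma qf_row m n (U : 'M[C]_(n, m)) (L : 'M[C]_m) i :
  qf (row i U) L = (U *m L *m U^t*) i i.
Proof.
rewrite /qf !mxE; apply: eq_bigr => k _; rewrite !mxE; congr (_ * _).
by apply: eq_bigr => l _; rewrite !mxE.
Qed.

Lemma tr_mul_diag m (A : 'M[C]_m) d : \tr (A *m diag_mx d) = \sum_i A i i * d 0 i.
Proof. by rewrite mul_mx_diag /mxtrace; apply: eq_bigr => i _; rewrite mxE. Qed.

Lemma S2 m (H : 'M[C]_m) (L : 'M[C]_m) : H \is hermsymmx ->
  retr (L *m H) =
  \sum_i complex.Re (qf (row i (spectralmx H)) L) * lam H i.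
Proof.
move=> hH; rewrite {1}(spec_decomp hH) /retr.
set U := spectralmx H; set D := diag_mx _.
rewrite !mulmxA mxtrace_mulC !mulmxA tr_mul_diag Re_sum.
apply: eq_bigr => i _.
have -> : (\row_i0 cR (lam H i0)) 0 i = cR (lam H i) by rewrite mxE.
by rewrite ReMR qf_row.
Qed.

Lemma qf_row1 m (H : 'M[C]_m) i : qf (row i (spectralmx H)) 1%:M = 1.
Proof. by rewrite qf_row mulmx1 UUt mxE eqxx mulr1n. Qed.

Lemma retr_herm m (H : 'M[C]_m) : H \is hermsymmx -> retr H = \sum_i lam H i.
Proof.
move=> hH; rewrite -{1}[H]mul1mx S2 //.
by apply: eq_bigr => i _; rewrite qf_row1 Re1 mul1r.
Qed.

Lemma tr_mxfun f m (A : 'M[C]_m) :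
  \tr (mxfun f A) = \sum_i cR (f (complex.Re (spectral_diag A 0 i))).
Proof.
rewrite /mxfun mxtrace_mulC mulmxA mulmxV ?spectral_unit // mul1mx.
by rewrite mxtrace_diag; apply: eq_bigr => i _; rewrite mxE.
Qed.

Lemma retrD m (A B : 'M[C]_m) : retr (A + B) = retr A + retr B.
Proof. by rewrite /retr mxtraceD ReD. Qed.
Lemma retrB m (A B : 'M[C]_m) : retr (A - B) = retr A - retr B.
Proof. by rewrite /retr raddfB ReB. Qed.
Lemma retrZR m x (A : 'M[C]_m) : retr (cR x *: A) = x * retr A.
Proof. by rewrite /retr mxtraceZ ReRM. Qed.
Lemma retr_sum m (I : finType) (F : I -> 'M[C]_m) :
  retr (\sum_i F i) = \sum_i retr (F i).
Proof.
rewrite /retr -Re_sum; congr complex.Re.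
by apply: (big_morph _ (@mxtraceD _ _)); rewrite mxtrace0.
Qed.

Lemma inv2C : (2%:R : C)^-1 = cR (2^-1).
Proof.
have h2 : (2%:R : C) != 0 by rewrite pnatr_eq0.
apply: (mulfI h2); rewrite mulfV //.
have -> : (2%:R : C) = cR 2.
  by apply/eqP; rewrite eq_complex /= addr0; apply/andP; split.
have h2r : (2 : R) != 0 by apply/eqP; lra.
by symmetry; apply/eqP; rewrite eq_complex /= !mulr0 !mul0r subr0 addr0 mulfV ?eqxx.
Qed.

Lemma retr_meet m (A B : 'M[C]_m) : A - B \is hermsymmx ->
  retr (meetmx A B) = retr A - Pos (A - B).
Proof.
move=> hH; rewrite /meetmx inv2C retrZR retrB retrD /absmx /retr tr_mxfun Re_sum.
have e1 := retr_herm hH; rewrite /retr raddfB /= ReB in e1.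
rewrite /Pos /pos -mulr_suml big_split /=.
rewrite -e1 /lam; lra.
Qed.
End Spec.
Section Ineq.
Variable R : realType.
Local Notation C := R[i].
Local Open Scope sesquilinear_scope.

Lemma diag_psd k m (U : 'M[C]_(k, m)) (f : 'I_k -> R) : (forall i, 0 <= f i) ->
  psdmx (U^t* *m diag_mx (\row_i cR (f i)) *m U).
Proof.
move=> hf; set S := diag_mx (\row_i cR (Num.sqrt (f i))).
have -> : diag_mx (\row_i cR (f i)) = S^t* *m S.
  rewrite /S adj_diagR mulmx_diag; congr diag_mx; apply/rowP => i; rewrite !mxE.
  by rewrite -cRM -expr2 sqr_sqrtr.
by rewrite mulmxA -mulmxA -adjM; exact: psd_gram.
Qed.

Lemma UHUt m (H : 'M[C]_m) : H \is hermsymmx ->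
  spectralmx H *m H *m (spectralmx H)^t* = diag_mx (\row_i cR (lam H i)).
Proof.
move=> hH; rewrite {2}(spec_decomp hH) !mulmxA UUt mul1mx -mulmxA UUt.
by rewrite mulmx1.
Qed.

Lemma qf_rowH m (H : 'M[C]_m) i : H \is hermsymmx ->
  qf (row i (spectralmx H)) H = cR (lam H i).
Proof. by move=> hH; rewrite qf_row UHUt // !mxE eqxx mulr1n. Qed.

Lemma lam_ge0 m (H : 'M[C]_m) i : psdmx H -> 0 <= lam H i.
Proof.
move=> hP; have hH : H \is hermsymmx by apply/hermP; exact: psd_herm.
have := psd_qf (row i (spectralmx H)) hP; rewrite qf_rowH //.
by rewrite cR_ge0.
Qed.

Lemma psd_hermsym m (H : 'M[C]_m) : psdmx H -> H \is hermsymmx.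
Proof. by move=> hP; apply/hermP; exact: psd_herm. Qed.

Lemma qf_bounds m (H L : 'M[C]_m) (p : R) i :
  (forall v, 0 <= qf v L) -> (forall v, 0 <= qf v ((cR p)%:M - L)) ->
  0 <= complex.Re (qf (row i (spectralmx H)) L) <= p.
Proof.
move=> h0 h1; apply/andP; split; first exact/ge0_Re/h0.
have := ge0_Re (h1 (row i (spectralmx H))).
by rewrite qfB qf_scalar qf_row1 mulr1 ReB Re_cR subr_ge0.
Qed.

Lemma LemA m (H L : 'M[C]_m) (p : R) : H \is hermsymmx ->
  (forall v, 0 <= qf v L) -> (forall v, 0 <= qf v ((cR p)%:M - L)) ->
  retr (L *m H) <= p * Pos H.
Proof.
move=> hH h0 h1; rewrite S2 // /Pos mulr_sumr; apply: ler_sum => i _.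
have /andP[ha hb] := qf_bounds H i h0 h1.
set a := complex.Re _ in ha hb *; set l := lam H i; rewrite /pos.
have [hl|hl] := lerP 0 l.
  by rewrite ger0_norm //; nra.
by rewrite ltr0_norm //; nra.
Qed.

Lemma diag1B k (f : 'I_k -> R) :
  diag_mx (\row_i cR (1 - f i)) = 1%:M - diag_mx (\row_i cR (f i)).
Proof.
apply/matrixP => i j; rewrite !mxE.
by case: eqP => _; rewrite ?mulr1n ?mulr0n ?subr0 // cRB cR1.
Qed.

Lemma LemB m (H : 'M[C]_m) : H \is hermsymmx ->
  exists Q, [/\ psdmx Q, psdmx (1%:M - Q) & retr (Q *m H) = Pos H].
Proof.
move=> hH; set U := spectralmx H.
pose chi i : R := if 0 < lam H i then 1 else 0.
exists (U^t* *m diag_mx (\row_i cR (chi i)) *m U); split.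
- by apply: diag_psd => i; rewrite /chi; case: ifP.
- have -> : 1%:M - U^t* *m diag_mx (\row_i cR (chi i)) *m U =
            U^t* *m diag_mx (\row_i cR (1 - chi i)) *m U.
    by rewrite diag1B mulmxBr mulmxBl mulmx1 UtU.
  by apply: diag_psd => i; rewrite /chi; case: ifP => _; lra.
- rewrite S2 // /Pos; apply: eq_bigr => i _.
  rewrite qf_row !mulmxA UUt mul1mx -mulmxA UUt mulmx1 !mxE eqxx mulr1n Re_cR.
  rewrite /chi /pos; case: ifP => hl.
    by rewrite ger0_norm ?ltW //; lra.
  by move/negbT: hl; rewrite -leNgt => hl; rewrite ler0_norm //; lra.
Qed.

Lemma tr_psd_ge0 m (P H : 'M[C]_m) :
  (forall v, 0 <= qf v P) -> psdmx H -> 0 <= retr (P *m H).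
Proof.
move=> hP hH; rewrite S2 ?psd_hermsym //; apply: sumr_ge0 => i _.
by apply: mulr_ge0; [exact/ge0_Re/hP | exact: lam_ge0].
Qed.

Lemma tr_psd_le m (Q H : 'M[C]_m) :
  psdmx Q -> psdmx (1%:M - Q) -> psdmx H -> retr (Q *m H) <= retr H.
Proof.
move=> hQ h1 hH; have hh := psd_hermsym hH.
rewrite S2 // retr_herm //; apply: ler_sum => i _.
have h1' : forall v, 0 <= qf v ((cR 1)%:M - Q) by move=> v; rewrite cR1 psd_qf.
have /andP[ha hb] := qf_bounds H i (fun v => psd_qf v hQ) h1'.
have := lam_ge0 i hH; nra.
Qed.

Lemma hermB m (A B : 'M[C]_m) : A \is hermsymmx -> B \is hermsymmx ->
  A - B \is hermsymmx.
Proof. by move=> /hermP hA /hermP hB; apply/hermP; rewrite adjB -hA -hB. Qed.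
Lemma hermD m (A B : 'M[C]_m) : A \is hermsymmx -> B \is hermsymmx ->
  A + B \is hermsymmx.
Proof. by move=> /hermP hA /hermP hB; apply/hermP; rewrite adjD -hA -hB. Qed.
Lemma hermZR m x (A : 'M[C]_m) : A \is hermsymmx -> cR x *: A \is hermsymmx.
Proof. by move=> /hermP hA; apply/hermP; rewrite adjZR -hA. Qed.

Lemma D1 m (W B : 'M[C]_m) : psdmx W -> psdmx B -> Pos (W - B) <= retr W.
Proof.
move=> hW hB; have hh := hermB (psd_hermsym hW) (psd_hermsym hB).
have [Q [hQ hQ1 <-]] := LemB hh.
rewrite mulmxBr retrB.
have := tr_psd_le hQ hQ1 hW; have := tr_psd_ge0 (fun v => psd_qf v hQ) hB.
lra.
Qed.

Lemma D2 m (H P : 'M[C]_m) : H \is hermsymmx -> P^t* *m P = 1%:M ->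
  Pos (P *m H *m P^t*) <= Pos H.
Proof.
move=> hH hP.
have hh : P *m H *m P^t* \is hermsymmx.
  by apply/hermP; rewrite !adjM trmxCK -(hermP _ hH) mulmxA.
have [Q [hQ hQ1 <-]] := LemB hh.
have -> : retr (Q *m (P *m H *m P^t*)) = retr ((P^t* *m Q *m P) *m H).
  by rewrite /retr !mulmxA mxtrace_mulC !mulmxA.
rewrite -[Pos H]mul1r; apply: LemA => // v.
  by rewrite -{2}[P]trmxCK qf_conj psd_qf.
have -> : (cR 1)%:M - P^t* *m Q *m P = P^t* *m (1%:M - Q) *m (P^t*)^t*.
  by rewrite trmxCK mulmxBr mulmxBl mulmx1 hP cR1.
by rewrite qf_conj psd_qf.
Qed.

Lemma D3 m (A B : 'M[C]_m) : A \is hermsymmx -> B \is hermsymmx ->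
  Pos (cR 2^-1 *: (A + B)) <= 2^-1 * Pos A + 2^-1 * Pos B.
Proof.
move=> hA hB; have hh := hermZR 2^-1 (hermD hA hB).
have [Q [hQ hQ1 <-]] := LemB hh.
rewrite -scalemxAr retrZR mulmxDr retrD mulrDr.
have h0 : forall v, 0 <= qf v Q by move=> v; rewrite psd_qf.
have h1 : forall v, 0 <= qf v ((cR 1)%:M - Q) by move=> v; rewrite cR1 psd_qf.
have := LemA hA h0 h1; have := LemA hB h0 h1.
rewrite !mul1r => e1 e2.
apply: lerD; apply: ler_wpM2l => //; lra.
Qed.
End Ineq.
Section Tens.
Variable R : realType.
Local Notation C := R[i].
Local Open Scope sesquilinear_scope.

Lemma adj_tens m n p q (A : 'M[C]_(m, n)) (B : 'M[C]_(p, q)) :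
  (A *t B)^t* = A^t* *t B^t*.
Proof. by rewrite trmx_tens map_mxT. Qed.

Lemma psd_factor m (A : 'M[C]_m) : psdmx A -> exists S : 'M[C]_m, A = S^t* *m S.
Proof.
move=> hA; have hh := psd_hermsym hA; set U := spectralmx A.
set S := diag_mx (\row_i cR (Num.sqrt (lam A i))).
exists (S *m U); rewrite adjM {1}(spec_decomp hh) -/U.
have -> : diag_mx (\row_i cR (lam A i)) = S^t* *m S.
  rewrite /S adj_diagR mulmx_diag; congr diag_mx; apply/rowP => i; rewrite !mxE.
  by rewrite -cRM -expr2 sqr_sqrtr // lam_ge0.
by rewrite !mulmxA.
Qed.

Lemma psd_tens m n (A : 'M[C]_m) (B : 'M[C]_n) :
  psdmx A -> psdmx B -> psdmx (A *t B).
Proof.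
move=> /psd_factor[S ->] /psd_factor[T ->].
by rewrite -tensmx_mul -adj_tens; exact: psd_gram.
Qed.

Lemma tr_tens m n (A : 'M[C]_m) (B : 'M[C]_n) : \tr (A *t B) = \tr A * \tr B.
Proof.
rewrite /mxtrace (reindex (@mxtens_index m n)) /=; last first.
  by exists (@mxtens_unindex m n) => x _; [rewrite mxtens_indexK | rewrite mxtens_unindexK].
rewrite mulr_suml; under [RHS]eq_bigr do rewrite mulr_sumr.
rewrite pair_big /=; apply: eq_bigr => [[i j]] _ /=.
by rewrite tensmxE.
Qed.

Lemma density_tens m n (A : 'M[C]_m) (B : 'M[C]_n) :
  density A -> density B -> density (A *t B).
Proof.
by move=> [hA tA] [hB tB]; split; [exact: psd_tens | rewrite tr_tens tA tB mulr1].
Qed.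

Lemma density_tens_rec m k (f : 'I_k.+1 -> 'M[C]_m) :
  (forall i, density (f i)) -> density (tens_rec f).
Proof.
elim: k f => [|k IH] f hf /=; first exact: hf.
by apply: density_tens => //; apply: IH.
Qed.

Lemma ntensmx_rec_eq m k (A : 'M[C]_m) : tens_rec (fun _ : 'I_k.+1 => A) = ntensmx A k.+1.
Proof.
rewrite /ntensmx; elim: k => [|k IH] //=.
by rewrite IH.
Qed.

Definition Emx N (i : 'I_2) : 'M[C]_(N, N * 2) :=
  \matrix_(a, b) ((b == mxtens_index (a, i))%:R).

Lemma idx_eq N (a c : 'I_N) (j i : 'I_2) :
  (mxtens_index (a, j) == mxtens_index (c, i)) = (a == c) && (j == i).
Proof. by rewrite (inj_eq (can_inj (@mxtens_indexK _ _))) xpair_eqE. Qed.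

Lemma Esum N (i j : 'I_2) (a : 'I_N) (F : 'I_N -> C) :
  \sum_c (mxtens_index (a, j) == mxtens_index (c, i))%:R * F c = (j == i)%:R * F a.
Proof.
under eq_bigr do rewrite idx_eq.
case: (j == i); last by rewrite mul0r big1 // => c _; rewrite andbF mul0r.
rewrite mul1r (bigD1 a) //= eqxx mul1r big1 ?addr0 // => c hc.
by rewrite eq_sym (negbTE hc) mul0r.
Qed.

Lemma E_iso N i : Emx N i *m (Emx N i)^t* = 1%:M.
Proof.
apply/matrixP => a a'; rewrite !mxE.
under eq_bigr do rewrite !mxE rmorph_nat.
rewrite (bigD1 (mxtens_index (a, i))) //= eqxx mul1r big1 ?addr0.
  by rewrite idx_eq eqxx andbT eq_sym.
by move=> b /negbTE ->; rewrite mul0r.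
Qed.

Lemma tens_delta N (A : 'M[C]_N) (i : 'I_2) :
  A *t delta_mx i i = (Emx N i)^t* *m A *m Emx N i.
Proof.
apply/matrixP => p q.
case: (mxtens_indexP p) => a j; case: (mxtens_indexP q) => b l.
rewrite tensmxE !mxE.
under eq_bigr do rewrite !mxE.
under eq_bigr => c' _.
  rewrite (eq_bigr (fun c => (mxtens_index (a, j) == mxtens_index (c, i))%:R * A c c')); last first.
    by move=> c _; rewrite !mxE rmorph_nat.
  rewrite Esum mulrC.
  over.
rewrite /= Esum.
by case: (j == i); case: (l == i); rewrite /= ?mul0r ?mul1r ?mulr0 ?mulr1.
Qed.
End Tens.
Arguments Emx {R} N i.
Section Perm.
Variable R : realType.
Local Notation C := R[i].
Local Open Scope sesquilinear_scope.
Variable m : nat.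

Fixpoint dig k : 'I_(m ^ k.+1) -> 'I_k.+1 -> 'I_m :=
  if k is k'.+1 return 'I_(m ^ k.+1) -> 'I_k.+1 -> 'I_m then
    fun a j => match unlift ord0 j with
               | None => (@mxtens_unindex m (m ^ k'.+1) a).1
               | Some j' => dig (@mxtens_unindex m (m ^ k'.+1) a).2 j'
               end
  else fun a _ => a.

Fixpoint enc k : ('I_k.+1 -> 'I_m) -> 'I_(m ^ k.+1) :=
  if k is k'.+1 return ('I_k.+1 -> 'I_m) -> 'I_(m ^ k.+1) then
    fun g => @mxtens_index m (m ^ k'.+1) (g ord0, enc (fun j => g (lift ord0 j)))
  else fun g => g ord0.

Lemma digS k a j : @dig k.+1 a j =
  match unlift ord0 j with
  | None => (@mxtens_unindex m (m ^ k.+1) a).1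
  | Some j' => dig (@mxtens_unindex m (m ^ k.+1) a).2 j'
  end.
Proof. by []. Qed.
Lemma encS k g : @enc k.+1 g =
  @mxtens_index m (m ^ k.+1) (g ord0, enc (fun j => g (lift ord0 j))).
Proof. by []. Qed.

Lemma enc_ext k (g g' : 'I_k.+1 -> 'I_m) : g =1 g' -> enc g = enc g'.
Proof.
elim: k g g' => [|k IH] g g' e /=; first exact: e.
by rewrite e (IH _ (fun j => g' (lift ord0 j))) // => j; rewrite e.
Qed.

Lemma digK k (g : 'I_k.+1 -> 'I_m) j : dig (enc g) j = g j.
Proof.
elim: k g j => [|k IH] g j; first by rewrite /= [j]ord1.
rewrite encS digS mxtens_indexK.
by case: (unliftP ord0 j) => [j'|] -> //=; rewrite IH.
Qed.

Lemma encK k (a : 'I_(m ^ k.+1)) : enc (dig a) = a.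
Proof.
elim: k a => [|k IH] a //.
rewrite encS digS unlift_none (enc_ext (g' := dig (mxtens_unindex a).2)); last first.
  by move=> j; rewrite digS liftK.
by rewrite IH -surjective_pairing mxtens_unindexK.
Qed.

Lemma tens_rec_E k (f : 'I_k.+1 -> 'M[C]_m) a b :
  tens_rec f a b = \prod_j f j (dig a j) (dig b j).
Proof.
elim: k f a b => [|k IH] f a b; first by rewrite /= big_ord1.
rewrite [tens_rec f]/= mxE big_ord_recl !digS !unlift_none; congr (_ * _).
rewrite IH; apply: eq_bigr => j _; by rewrite !digS !liftK.
Qed.

Section OnePerm.
Variable k : nat.
Variable pi : {perm 'I_k.+1}.

Definition phi (a : 'I_(m ^ k.+1)) : 'I_(m ^ k.+1) := enc (fun j => dig a (pi j)).

Lemma phi_inj : injective phi.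
Proof.
move=> a b e.
have e2 : forall j, dig a (pi j) = dig b (pi j).
  by move=> j; rewrite -(digK (fun j => dig a (pi j))) -/(phi a) e /phi digK.
rewrite -(encK a) -(encK b); apply: enc_ext => j.
by have := e2 (pi^-1 j)%g; rewrite permKV.
Qed.

Definition Pmx : 'M[C]_(m ^ k.+1) := \matrix_(a, b) ((b == phi a)%:R).

Lemma Pmx_iso : Pmx *m Pmx^t* = 1%:M.
Proof.
apply/matrixP => a b; rewrite !mxE.
under eq_bigr do rewrite !mxE rmorph_nat.
rewrite (bigD1 (phi a)) //= eqxx mul1r big1 ?addr0.
  by rewrite (inj_eq phi_inj) eq_sym.
by move=> c /negbTE ->; rewrite mul0r.
Qed.

Lemma Pmx_iso' : Pmx^t* *m Pmx = 1%:M.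
Proof. by apply: mulmx1C; exact: Pmx_iso. Qed.

Lemma Pmx_conjE (A : 'M[C]_(m ^ k.+1)) a b :
  (Pmx *m A *m Pmx^t*) a b = A (phi a) (phi b).
Proof.
rewrite !mxE.
under eq_bigr => c' _.
  rewrite mxE (eq_bigr (fun c => (c == phi a)%:R * A c c')); last first.
    by move=> c _; rewrite !mxE.
  rewrite (bigD1 (phi a)) //= eqxx mul1r big1 ?addr0; last first.
    by move=> c /negbTE ->; rewrite mul0r.
  rewrite !mxE rmorph_nat.
  over.
rewrite /= (bigD1 (phi b)) //= eqxx mulr1 big1 ?addr0 //.
by move=> c /negbTE ->; rewrite mulr0.
Qed.

Lemma Pmx_tens (f : 'I_k.+1 -> 'M[C]_m) :
  Pmx *m tens_rec f *m Pmx^t* = tens_rec (fun j => f (pi^-1 j)%g).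
Proof.
apply/matrixP => a b; rewrite Pmx_conjE !tens_rec_E /phi.
under eq_bigr do rewrite !digK.
rewrite [RHS](reindex_inj (@perm_inj _ pi)) /=.
by apply: eq_bigr => j _; rewrite permK.
Qed.

Lemma Pos_Pmx (H : 'M[C]_(m ^ k.+1)) : H \is hermsymmx ->
  Pos (Pmx *m H *m Pmx^t*) = Pos H.
Proof.
move=> hH; apply/eqP; rewrite eq_le D2 ?Pmx_iso' //=.
have hh : Pmx *m H *m Pmx^t* \is hermsymmx.
  by apply/hermP; rewrite !adjM trmxCK -(hermP _ hH) mulmxA.
have := D2 hh (P := Pmx^t*); rewrite trmxCK Pmx_iso => /(_ erefl).
by rewrite !mulmxA Pmx_iso' mul1mx -mulmxA Pmx_iso' mulmx1.
Qed.
End OnePerm.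
End Perm.
Arguments Pmx {R} m {k} pi.
Section Types.
Variable X : finType.

Definition tcount n (x : n.-tuple X) : {ffun X -> nat} := [ffun a => count_mem a x].

Lemma sum_count (s : seq X) : (\sum_a count_mem a s)%N = size s.
Proof.
elim: s => [|y s IH] /=; first by rewrite big1.
rewrite big_split /= IH (bigD1 y) //= eqxx big1 // => a ha.
by rewrite eq_sym (negbTE ha).
Qed.

Lemma tcount_types n (x : n.-tuple X) : @types X n (tcount x).
Proof.
rewrite /types /=; under eq_bigr do rewrite ffunE.
by rewrite sum_count size_tuple.
Qed.

Lemma count_type_word (k : {ffun X -> nat}) a : count_mem a (type_word k) = k a.
Proof.
rewrite /type_word count_flatten -map_comp.
under eq_map do rewrite /= count_nseq.
rewrite sumnE big_map big_enum /= (bigD1 a) //= eqxx mul1n big1 ?addn0 //.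
by move=> b /negbTE ->.
Qed.

Lemma size_type_word (k : {ffun X -> nat}) : size (type_word k) = (\sum_a k a)%N.
Proof. by rewrite -sum_count; apply: eq_bigr => a _; rewrite count_type_word. Qed.

Lemma perm_type_word n (x : n.-tuple X) : perm_eq x (type_word (tcount x)).
Proof. by apply/allP => z _; rewrite /= count_type_word ffunE. Qed.

End Types.

Section Heavy.
Variable R : realType.
Lemma heavy (I J : finType) (j0 : J) (h : I -> J) (q : I -> R) :
  exists j, \sum_i q i <= #|J|%:R * \sum_(i | h i == j) q i.
Proof.
case: (pselect (exists j, \sum_i q i <= #|J|%:R * \sum_(i | h i == j) q i)) => // hn.
exfalso.
have hlt : forall j, #|J|%:R * \sum_(i | h i == j) q i < \sum_i q i.
  move=> j; rewrite ltNge; apply/negP => hj; apply: hn; by exists j.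
have : \sum_(j : J) #|J|%:R * \sum_(i | h i == j) q i < \sum_(j : J) \sum_i q i.
  apply: ltr_sum => //; apply/hasP; exists j0 => //; exact: mem_index_enum.
have e : \sum_i q i = \sum_j \sum_(i | h i == j) q i.
  by rewrite (partition_big h xpredT).
have hS : \sum_(j : J) \sum_i q i = (\sum_i q i) * #|J|%:R.
  by rewrite sumr_const mulr_natr; congr (_ *+ _); apply: eq_card.
by rewrite -mulr_sumr -e hS mulrC ltxx.
Qed.
End Heavy.
Section Main.
Variable R : realType.
Local Notation C := R[i].
Local Open Scope sesquilinear_scope.
Variables (X : finType) (d : nat) (W : X -> 'M[C]_d).
Hypothesis hW : cqchannel W.

Lemma cq_density k (w : k.+1.-tuple X) : density (cq_pow W w).
Proof. by rewrite /cq_pow /=; apply: density_tens_rec => i; exact: hW. Qed.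

Lemma ntens_density k (s : 'M[C]_d) : density s -> density (ntensmx s k.+1).
Proof. by move=> hs; rewrite -ntensmx_rec_eq; apply: density_tens_rec. Qed.

Lemma retr_density m (A : 'M[C]_m) : density A -> retr A = 1.
Proof. by case=> _; rewrite /retr => ->. Qed.

Lemma Escal N i (c : C) : Emx N i *m c%:M *m (Emx N i)^t* = c%:M.
Proof. by rewrite mul_mx_scalar -scalemxAl E_iso scalemx1. Qed.

Lemma step1 k (Lam : k.+1.-tuple X * 'I_2 -> 'M[C]_(d ^ k.+1 * 2)) (p : _ -> R)
  (hsum : \sum_xi Lam xi = 1%:M)
  (hL : forall xi, psdmx (Lam xi) /\ psdmx ((cR (p xi))%:M - Lam xi))
  (B : 'M[C]_(d ^ k.+1)) (hB : psdmx B) :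
  \sum_xi retr (Lam xi *m chan_pow_I2 W xi) <=
  \sum_xi p xi * Pos (cq_pow W xi.1 - B) + 2 * retr B.
Proof.
set N := (d ^ k.+1)%N.
pose T xi j := retr (Lam xi *m ((Emx N j)^t* *m B *m Emx N j)).
have hT0 : forall xi j, 0 <= T xi j.
  move=> xi j; apply: tr_psd_ge0; first by move=> v; apply: psd_qf; case: (hL xi).
  by rewrite -{2}[Emx N j]trmxCK; apply: psd_conj.
have h1 : forall xi, retr (Lam xi *m chan_pow_I2 W xi) <=
    p xi * Pos (cq_pow W xi.1 - B) + T xi xi.2.
  case=> x i; rewrite /chan_pow_I2 /= tens_delta /T.
  set E := Emx N i; set L := Lam (x, i); set Wx := cq_pow W x.
  have -> : retr (L *m (E^t* *m Wx *m E)) = retr ((E *m L *m E^t*) *m Wx).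
    by rewrite /retr !mulmxA mxtrace_mulC !mulmxA.
  have -> : retr (L *m (E^t* *m B *m E)) = retr ((E *m L *m E^t*) *m B).
    by rewrite /retr !mulmxA mxtrace_mulC !mulmxA.
  have -> : retr ((E *m L *m E^t*) *m Wx) =
      retr ((E *m L *m E^t*) *m (Wx - B)) + retr ((E *m L *m E^t*) *m B).
    by rewrite mulmxBr retrB subrK.
  apply: lerD => //; apply: LemA.
  - apply: hermB; [exact/psd_hermsym/(cq_density x).1 | exact: psd_hermsym].
  - by move=> v; rewrite qf_conj; apply: psd_qf; case: (hL (x, i)).
  - move=> v; rewrite -(Escal N i) -mulmxBl -mulmxBr qf_conj.
    by apply: psd_qf; case: (hL (x, i)).
apply: le_trans (ler_sum _ (fun xi _ => h1 xi)) _.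
rewrite big_split /=; apply: lerD => //.
apply: (@le_trans _ _ (\sum_xi \sum_j T xi j)).
  apply: ler_sum => xi _; rewrite (bigD1 xi.2) //= lerDl.
  by apply: sumr_ge0 => j _; exact: hT0.
rewrite exchange_big /=.
have -> : \sum_j \sum_xi T xi j = \sum_(j < 2) retr B.
  apply: eq_bigr => j _; rewrite /T -retr_sum -mulmx_suml hsum mul1mx.
  by rewrite /retr mxtrace_mulC mulmxA E_iso mul1mx.
by rewrite sumr_const card_ord mulr_natl.
Qed.
End Main.
Section Main2.
Variable R : realType.
Local Notation C := R[i].
Local Open Scope sesquilinear_scope.
Variables (X : finType) (d : nat) (W : X -> 'M[C]_d).
Hypothesis hW : cqchannel W.

Lemma cq_perm k (x w : k.+1.-tuple X) (sg : 'M[C]_d) (c : R) :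
  density sg -> perm_eq x w ->
  Pos (cq_pow W x - cR c *: ntensmx sg k.+1) = Pos (cq_pow W w - cR c *: ntensmx sg k.+1).
Proof.
move=> hs /tuple_permP[q hq].
have ex : x = [tuple tnth w (q i) | i < k.+1] by apply: val_inj.
set pi := (q^-1)%g.
have e1 : Pmx d pi *m cq_pow W w *m (Pmx d pi)^t* = cq_pow W x.
  rewrite /cq_pow /= Pmx_tens ex; congr tens_rec; apply: boolp.funext => j.
  by rewrite tnth_mktuple /pi invgK.
have e2 : Pmx d pi *m ntensmx sg k.+1 *m (Pmx d pi)^t* = ntensmx sg k.+1.
  by rewrite -ntensmx_rec_eq Pmx_tens.
have -> : cq_pow W x - cR c *: ntensmx sg k.+1 =
    Pmx d pi *m (cq_pow W w - cR c *: ntensmx sg k.+1) *m (Pmx d pi)^t*.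
  by rewrite mulmxBr mulmxBl e1 -scalemxAr -scalemxAl e2.
apply: Pos_Pmx; apply: hermB.
  exact/psd_hermsym/(cq_density hW w).1.
by apply/hermZR/psd_hermsym; exact: (ntens_density k hs).1.
Qed.
End Main2.
Section Core.
Variable R : realType.
Local Notation C := R[i].
Local Open Scope sesquilinear_scope.

Lemma psd0 m : psdmx (0 : 'M[C]_m).
Proof.
apply/psdE; split.
  by apply/matrixP => i j; rewrite !mxE rmorph0.
by move=> v; rewrite /qf mulmx0 mul0mx mxE.
Qed.

Lemma psd_scale m (c : R) (A : 'M[C]_m) : 0 <= c -> psdmx A -> psdmx (cR c *: A).
Proof.
move=> hc hA; apply/psdE; split; first by rewrite adjZR -(psd_herm hA).
by move=> v; rewrite qfZ; apply: mulr_ge0; [rewrite cR_ge0 | exact: psd_qf].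
Qed.

Variables (X : finType) (d : nat) (W : X -> 'M[C]_d).
Hypothesis hW : cqchannel W.

Lemma core k (M : nat) (hM : (0 < M)%N)
  (Lam : k.+1.-tuple X * 'I_2 -> 'M[C]_(d ^ k.+1 * 2)) (p : _ -> R)
  (hsum : \sum_xi Lam xi = 1%:M)
  (hL : forall xi, psdmx (Lam xi) /\ psdmx ((cR (p xi))%:M - Lam xi))
  (hp : forall xi, 0 <= p xi) (hpM : \sum_xi p xi = M%:R) :
  exists kk, @types X k.+1 kk /\ forall (sg : 'M[C]_d) (s : R), density sg -> 0 <= s ->
   gamma_n R X k.+1 * retr (meetmx (WT W k.+1 kk) (cR (M%:R * s) *: ntensmx sg k.+1)) - s
   <= 1 - M%:R^-1 * \sum_xi retr (Lam xi *m chan_pow_I2 W xi).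
Proof.
pose J := {ffun X -> 'I_k.+2}.
pose h (xi : k.+1.-tuple X * 'I_2) : J := [ffun a => inord (count_mem a xi.1)].
have [t ht] := heavy ([ffun _ => ord0] : J) h p.
set Q := \sum_(xi | h xi == t) p xi in ht.
have hMr : 0 < (M%:R : R) by rewrite ltr0n.
have hK : (#|J|%:R : R) = (k.+2%:R) ^+ #|X| by rewrite card_ffun card_ord natrX.
have hKpos : 0 < (k.+2%:R : R) ^+ #|X| by rewrite exprn_gt0 // ltr0n.
case: (pickP (fun xi => h xi == t)) => [xi0 hxi0 | hnone]; last first.
  exfalso; have hQ0 : Q = 0 by rewrite /Q big_pred0.
  move: ht; rewrite hQ0 mulr0 hpM => h0.
  by move: hMr; rewrite ltNge h0.
set kk := tcount xi0.1.
exists kk; split; first exact: tcount_types.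
have hcls : forall xi, h xi == t -> tcount xi.1 = kk.
  move=> xi /eqP hx; apply/ffunP => a; rewrite !ffunE.
  move/eqP: hxi0 => hx0.
  have := congr1 (fun f : J => val (f a)) (etrans hx (esym hx0)).
  rewrite /h !ffunE /= !inordK // ltnS.
    by rewrite -[X in (_ <= X)%N](size_tuple xi0.1) count_size.
  by rewrite -[X in (_ <= X)%N](size_tuple xi.1) count_size.
have hsz : size (type_word kk) == k.+1.
  by rewrite size_type_word; apply/eqP; exact: tcount_types.
pose w : k.+1.-tuple X := Tuple hsz.
have hWT : WT W k.+1 kk = cq_pow W w by rewrite /WT insubT.
have hperm : forall xi, h xi == t -> perm_eq xi.1 w.
  by move=> xi hx; have := perm_type_word xi.1; rewrite hcls.
move=> sg s hsg hs.
have hsgn := ntens_density k hsg.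
set B := cR (M%:R * s / 2) *: ntensmx sg k.+1.
set Bf := cR (M%:R * s) *: ntensmx sg k.+1.
have hMs : 0 <= M%:R * s by apply: mulr_ge0 => //; exact: ltW.
have hB : psdmx B by apply: psd_scale; [lra | exact: hsgn.1].
have hBf : psdmx Bf by apply: psd_scale => //; exact: hsgn.1.
have hretrB : retr B = M%:R * s / 2 by rewrite retrZR retr_density // mulr1.
have hs1 := step1 hW hsum hL hB.
pose F (xi : k.+1.-tuple X * 'I_2) := Pos (cq_pow W xi.1 - B).
have hF1 : forall xi, F xi <= 1.
  move=> xi; rewrite -(retr_density (cq_density hW xi.1)).
  by apply: D1 => //; exact: (cq_density hW xi.1).1.
set Fw := Pos (cq_pow W w - B).
have hFc : forall xi, h xi == t -> F xi = Fw.
  by move=> xi hx; rewrite /F /Fw /B (cq_perm hW (w := w)) // hperm.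
have hsplit : \sum_xi p xi * F xi <= M%:R - Q * (1 - Fw).
  rewrite (bigID (fun xi => h xi == t)) /=.
  have e : \sum_(xi | h xi == t) p xi * F xi = Q * Fw.
    by rewrite /Q mulr_suml; apply: eq_bigr => xi hx; rewrite hFc.
  have e2 : \sum_(xi | h xi != t) p xi * F xi <= \sum_(xi | h xi != t) p xi.
    apply: ler_sum => xi _; rewrite -{2}[p xi]mulr1; apply: ler_wpM2l => //.
  have e3 : \sum_(xi | h xi != t) p xi = M%:R - Q.
    rewrite -hpM (bigID (fun xi => h xi == t) xpredT) /= -/Q; lra.
  rewrite e; lra.
have hg0 : 0 <= 1 - Fw by rewrite -(hFc xi0 hxi0); have := hF1 xi0; lra.
have hWw := cq_density hW w.
have hmeet : 2^-1 * retr (meetmx (cq_pow W w) Bf) <= 1 - Fw.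
  rewrite retr_meet; last first.
    by apply: hermB; apply: psd_hermsym; [exact: hWw.1 | exact: hBf].
  rewrite retr_density //.
  have eW : cq_pow W w - B = cR 2^-1 *: (cq_pow W w + (cq_pow W w - Bf)).
    rewrite scalerDr scalerBr addrA -scalerDl -cRD.
    have -> : (2^-1 + 2^-1 : R) = 1 by lra.
    by rewrite cR1 scale1r /Bf scalerA -cRM mulrC.
  have hD3 := D3 (psd_hermsym hWw.1) (hermB (psd_hermsym hWw.1) (psd_hermsym hBf)).
  rewrite -eW -/Fw in hD3.
  have hPW : Pos (cq_pow W w) <= 1.
    rewrite -(retr_density hWw) -{1}[cq_pow W w]subr0.
    by apply: D1; [exact: hWw.1 | exact: psd0].
  lra.
rewrite hWT /gamma_n.
set mt := retr (meetmx (cq_pow W w) Bf).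
set Sig := \sum_xi retr (Lam xi *m chan_pow_I2 W xi).
set g := 1 - Fw.
have hKi : 0 < (k.+2%:R ^+ #|X| : R)^-1 by rewrite invr_gt0.
set Ki := (k.+2%:R ^+ #|X| : R)^-1 in hKi *.
rewrite card_ffun card_ord natrX hpM in ht.
have hsp : \sum_xi p xi * Pos (cq_pow W xi.1 - B) <= M%:R - Q * g := hsplit.
have hQ : M%:R * Ki <= Q by rewrite /Ki ler_pdivrMr // mulrC.
have h1 : M%:R * Ki * g <= Q * g by apply: ler_wpM2r.
have h2 : Sig <= M%:R * (1 - Ki * g + s).
  have -> : M%:R * (1 - Ki * g + s) = M%:R - M%:R * Ki * g + M%:R * s by ring.
  move: hs1; rewrite -/Sig hretrB => hs1; lra.
have h3 : M%:R^-1 * Sig <= 1 - Ki * g + s.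
  rewrite -(ler_pM2l hMr) mulrA mulfV ?mul1r //; exact: lt0r_neq0.
have h4 : 2^-1 * Ki * mt <= Ki * g.
  have := ler_wpM2l (ltW hKi) hmeet.
  by rewrite mulrA [Ki * 2^-1]mulrC.
lra.
Qed.
End Core.
Section E.
Variable R : realType.
Local Open Scope ereal_scope.
Lemma ereal_flip (L S : \bar R) : S <= 1 - L -> L <= 1 - S.
Proof.
case: L => [r||]; case: S => [s||] //=.
- by rewrite -!EFinD !lee_fin => h; rewrite (_ : r = (1 - (1 - r))%R); [lra|ring].
- by move=> _; exact: leey.
- by move=> _; exact: leNye.
Qed.
End E.

Unset Implicit Arguments.

Theorem lemma1 (R : realType) (X : finType) (d : nat) (W : X -> 'M[R[i]]_d)
    (n M : nat) (r : R) :
  cqchannel W -> (0 < n)%N -> (0 < M)%N ->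
  (C0cap W < r%:E)%E -> (r%:E < Ccap W)%E ->
  (ereal_inf [set v : \bar R | exists k, @types X n k /\
     v = ereal_sup [set u : \bar R | exists (sigma : 'M[R[i]]_d) (s : R),
           [/\ density sigma, (0 <= s)%R &
               u = ((gamma_n R X n *
                     retr (meetmx (WT W n k)
                                  (cR (M%:R * s) *: ntensmx sigma n)) - s)%R)%:E]]]
   <= eps_NS M%:R (chan_pow_I2 W (n:=n)))%E.
Proof.
move=> hW hn hM _ _.
case: n hn => [//|k] _.
set S := [set v : \bar R | _].
have claim : forall y, NS_success M%:R (chan_pow_I2 W (n:=k.+1)) y ->
    (ereal_inf S <= (1 - y)%:E)%E.
  move=> y [Lam [p [hsum hL hp hpM ->]]].
  have hL' : forall xi, psdmx (Lam xi) /\ psdmx ((cR (p xi))%:M - Lam xi).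
    by move=> xi; case: (hL xi); rewrite /lemx subr0.
  have [kk [hkk hb]] := core hW hM hsum hL' hp hpM.
  apply: (@le_trans _ _ (ereal_sup [set u : \bar R | exists (sigma : 'M[R[i]]_d) (s : R),
           [/\ density sigma, (0 <= s)%R &
               u = ((gamma_n R X k.+1 *
                     retr (meetmx (WT W k.+1 kk)
                                  (cR (M%:R * s) *: ntensmx sigma k.+1)) - s)%R)%:E]])).
    by apply: (@ereal_inf_lbound _ S); exists kk.
  apply: ub_ereal_sup => _ [sg [s [hsg hs ->]]].
  by rewrite lee_fin; apply: hb.
rewrite /eps_NS; apply: ereal_flip.
apply: ub_ereal_sup => _ [y hy <-].
have := claim y hy.
case: (ereal_inf S) => [l||] //=.
- by rewrite !lee_fin => h; lra.
- by move=> _; exact: leey.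
Qed.
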